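(* In the session calculus, weak fairness of instructions (WI) coincides with justness (J): a path is WI-fair iff it is just.
   Context: Session calculus: threads $P ::= \mathbf{end} \mid \bigoplus_{i\in I} p_i!\lambda_i;P_i \mid \sum_{i\in I} p_i?\lambda_i;P_i \mid X \mid \mu X.P$ (guarded recursion), thread states additionally $\langle q!\lambda\rangle;P$; networks $p[\![P]\!]\mid 0\mid N\parallel N$ with distinct locations and closed threads, modulo associativity/commutativity/unit. Transitions: (choice) $p[\![\bigoplus_{i\in I}p_i!\lambda_i;P_i]\!]\parallel N \xrightarrow{\tau} p[\![\langle p_k!\lambda_k\rangle;P_k]\!]\parallel N$; (unfold) $p[\![\mu X.P]\!]\parallel N\xrightarrow{\tau} p[\![P\{\mu X.P/X\}]\!]\parallel N$; (comm) $p_k[\![\langle q!\lambda_k\rangle;Q]\!]\parallel q[\![\sum_{i\in I}p_i?\lambda_i;P_i]\!]\parallel N \xrightarrow{(p_k,\lambda_k,q)} p_k[\![Q]\!]\parallel q[\![P_k]\!]\parallel N$. $\mathrm{comp}(t)$ is the moving location for a $\tau$-transition and $\{p,q\}$ for label $(p,\lambda,q)$; $t,u$ are concurrent if $\mathrm{comp}(t)\cap\mathrm{comp}(u)=\emptyset$. A path is a network state with a maximal sequence of transitions. Instructions: the occurrences of subexpressions $p_k!\lambda_k$, $p_k?\lambda_k$ or $\mu X$ in the network expression; each $\tau$-transition stems from exactly one instruction and each communication transition from exactly two (output and matching input); $\mathrm{instr}(t)$ is this set. An instruction $I$ is enabled in $N$ if some transition $t$ from $N$ has $I\in\mathrm{instr}(t)$,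 perpetually enabled on a path if enabled in all its states, and engaged in by a path containing such a $t$. A path $\pi$ is WI-fair if for every suffix $\pi'$, every instruction perpetually enabled on $\pi'$ is engaged in by $\pi'$. A path $\pi$ is just if for every suffix starting in state $s$ and every transition $t$ enabled in $s$, that suffix contains a transition $u$ not concurrent with $t$. *)

(* Defs.v *)
From Stdlib Require Import List Arith.
Import ListNotations.

Definition loc := nat.
Definition label := nat.
Definition var := nat.
Definition tag := nat.

(* Thread states.  Every instruction occurrence (p!l, p?l, mu X) carries a
   tag naming that occurrence; a pending output <q!l>;P remembers the tag of
   the output instruction it was selected from. *)
Inductive thread : Type :=
| TEnd : thread
| TOut : branches -> thread
| TIn : branches -> thread
| TVar : var -> thread
| TMu : tag -> var -> thread -> thread
| TPend : loc -> label -> tag -> thread -> thread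
with branches : Type :=
| BNil : branches
| BCons : loc -> label -> tag -> thread -> branches -> branches.

Fixpoint InB (p : loc) (l : label) (a : tag) (P : thread) (bs : branches) : Prop :=
  match bs with
  | BNil => False
  | BCons p' l' a' P' bs' => (p = p' /\ l = l' /\ a = a' /\ P = P') \/ InB p l a P bs'
  end.

(* substitution P{Q/X} (Q closed, so no capture) *)
Fixpoint subst (X : var) (Q : thread) (P : thread) : thread :=
  match P with
  | TEnd => TEnd
  | TOut bs => TOut (substB X Q bs)
  | TIn bs => TIn (substB X Q bs)
  | TVar Y => if Nat.eqb X Y then Q else TVar Y
  | TMu a Y P' => if Nat.eqb X Y then TMu a Y P' else TMu a Y (subst X Q P')
  | TPend q l a P' => TPend q l a (subst X Q P')
  end
with substB (X : var) (Q : thread) (bs : branches) : branches :=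
  match bs with
  | BNil => BNil
  | BCons p l a P bs' => BCons p l a (subst X Q P) (substB X Q bs')
  end.

Definition rmv (X : var) (l : list var) : list var :=
  filter (fun Y => negb (Nat.eqb X Y)) l.

Fixpoint fv (P : thread) : list var :=
  match P with
  | TEnd => []
  | TOut bs | TIn bs => fvB bs
  | TVar X => [X]
  | TMu _ X P' => rmv X (fv P')
  | TPend _ _ _ P' => fv P'
  end
with fvB (bs : branches) : list var :=
  match bs with
  | BNil => []
  | BCons _ _ _ P bs' => fv P ++ fvB bs'
  end.

Fixpoint unguarded (P : thread) : list var :=
  match P with
  | TVar X => [X]
  | TMu _ X P' => rmv X (unguarded P')
  | _ => []
  end.

Fixpoint guarded (P : thread) : Prop :=
  match P with
  | TEnd | TVar _ => True
  | TOut bs | TIn bs => guardedB bs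
  | TMu _ X P' => ~ In X (unguarded P') /\ guarded P'
  | TPend _ _ _ P' => guarded P'
  end
with guardedB (bs : branches) : Prop :=
  match bs with
  | BNil => True
  | BCons _ _ _ P bs' => guarded P /\ guardedB bs'
  end.

(* a thread proper (not a thread state): no pending outputs *)
Fixpoint nopend (P : thread) : Prop :=
  match P with
  | TEnd | TVar _ => True
  | TOut bs | TIn bs => nopendB bs
  | TMu _ _ P' => nopend P'
  | TPend _ _ _ _ => False
  end
with nopendB (bs : branches) : Prop :=
  match bs with
  | BNil => True
  | BCons _ _ _ P bs' => nopend P /\ nopendB bs'
  end.

Fixpoint tags (P : thread) : list tag :=
  match P with
  | TEnd | TVar _ => []
  | TOut bs | TIn bs => tagsB bs
  | TMu a _ P' => a :: tags P'
  | TPend _ _ a P' => a :: tags P'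
  end
with tagsB (bs : branches) : list tag :=
  match bs with
  | BNil => []
  | BCons _ _ a P bs' => a :: tags P ++ tagsB bs'
  end.

(* Networks modulo assoc/comm/unit with distinct locations:
   a partial map from locations to thread states. *)
Definition net := loc -> option thread.

Definition upd (N : net) (p : loc) (P : thread) : net :=
  fun r => if Nat.eqb r p then Some P else N r.

Definition initial_net (N : net) : Prop :=
  (exists locs : list loc, forall p, N p <> None -> In p locs) /\
  (forall p P, N p = Some P ->
     fv P = [] /\ guarded P /\ nopend P /\ NoDup (tags P)).

Inductive act : Type :=
| ATau : loc -> act
| AComm : loc -> label -> loc -> act.

Definition comp (a : act) : list loc :=
  match a with
  | ATau p => [p]
  | AComm p _ q => [p; q]
  end.

(* an instruction: an occurrence, named by its location and its tag *)
Definition instr := (loc * tag)%type.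

(* step N a I N' : a transition from N with label a, stemming from the set of
   instructions I, to N' *)
Inductive step : net -> act -> list instr -> net -> Prop :=
| st_choice : forall N p bs q l a P,
    N p = Some (TOut bs) -> InB q l a P bs ->
    step N (ATau p) [(p, a)] (upd N p (TPend q l a P))
| st_unfold : forall N p a X P,
    N p = Some (TMu a X P) ->
    step N (ATau p) [(p, a)] (upd N p (subst X (TMu a X P) P))
| st_comm : forall N p q l a Q bs b P,
    p <> q ->
    N p = Some (TPend q l a Q) -> N q = Some (TIn bs) -> InB p l b P bs ->
    step N (AComm p l q) [(p, a); (q, b)] (upd (upd N p Q) q P).

Definition reachable (N N' : net) : Prop :=
  Relation_Operators.clos_refl_trans net
    (fun M M' => exists a I, step M a I M') N N'.

(* A path: states pst 0, pst 1, ... and transitions (pact j, pins j) from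
   pst j to pst (j+1); plen = Some n for a finite path with n transitions,
   None for an infinite one. *)
Record path : Type := mkPath {
  pst : nat -> net;
  pact : nat -> act;
  pins : nat -> list instr;
  plen : option nat }.

Definition tr_idx (pi : path) (j : nat) : Prop :=
  match plen pi with None => True | Some n => j < n end.
Definition st_idx (pi : path) (j : nat) : Prop :=
  match plen pi with None => True | Some n => j <= n end.

Definition is_path (pi : path) : Prop :=
  (forall j, tr_idx pi j -> step (pst pi j) (pact pi j) (pins pi j) (pst pi (S j))) /\
  (forall n, plen pi = Some n -> forall a I N', ~ step (pst pi n) a I N').

Definition enabled (i : instr) (N : net) : Prop :=
  exists a I N', step N a I N' /\ In i I.

Definition WI_fair (pi : path) : Prop :=
  forall k, st_idx pi k ->
  forall i : instr,
    (forall j, k <= j -> st_idx pi j -> enabled i (pst pi j)) ->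
    exists j, k <= j /\ tr_idx pi j /\ In i (pins pi j).

(* justness: for every suffix starting in state pst k and every transition t
   enabled there, the suffix contains a transition not concurrent with t *)
Definition just (pi : path) : Prop :=
  forall k, st_idx pi k ->
  forall a I N', step (pst pi k) a I N' ->
    exists j, k <= j /\ tr_idx pi j /\
      exists r, In r (comp a) /\ In r (comp (pact pi j)).

(* Main.v *)
Require Import Defs.
From Stdlib Require Import List Arith Lia Permutation Classical.
Import ListNotations.

Fixpoint toptags (bs : branches) : list tag :=
  match bs with BNil => [] | BCons _ _ a _ bs' => a :: toptags bs' end.

Definition headtags (T : thread) : list tag :=
  match T with
  | TOut bs | TIn bs => toptags bs
  | TMu a _ _ => [a]
  | TPend _ _ a _ => [a]
  | _ => []
  end.

Lemma InB_top : forall bs q l a P, InB q l a P bs -> In a (toptags bs).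
Proof.
  induction bs as [|p0 l0 a0 P0 bs IH]; simpl; [tauto|].
  intros q l a P [[? [? [? ?]]]|H]; subst; eauto.
Qed.

Lemma upd_eq : forall N p P, upd N p P p = Some P.
Proof. intros; unfold upd; rewrite Nat.eqb_refl; auto. Qed.
Lemma upd_neq : forall N p P r, r <> p -> upd N p P r = N r.
Proof. intros; unfold upd; destruct (Nat.eqb_spec r p); congruence. Qed.

Lemma step_frame : forall N a I N' r, step N a I N' -> ~ In r (comp a) -> N' r = N r.
Proof.
  intros N a I N' r H Hr; destruct H; simpl in Hr.
  - rewrite upd_neq; intuition.
  - rewrite upd_neq; intuition.
  - rewrite !upd_neq; intuition.
Qed.

Lemma instr_loc : forall N a I N' p x, step N a I N' -> In (p,x) I -> In p (comp a).
Proof.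
  intros N a I N' p x H Hi; destruct H; simpl in *; intuition congruence.
Qed.

Lemma step_nonempty : forall N a I N', step N a I N' -> exists i, In i I.
Proof. intros N a I N' H; destruct H; simpl; eauto. Qed.

Lemma step_agree : forall N a I N' M, step N a I N' ->
  (forall r, In r (comp a) -> M r = N r) -> exists M', step M a I M'.
Proof.
  intros N a I N' M H Hag; destruct H; simpl in Hag.
  - eexists; eapply st_choice; [rewrite Hag; [exact H|auto] | exact H0].
  - eexists; eapply st_unfold; rewrite Hag; [exact H|auto].
  - eexists; eapply st_comm; [exact H | rewrite Hag; [exact H0|auto] | rewrite Hag; [exact H1|auto] | exact H2].
Qed.

Lemma enab_cases : forall N a I N' p x, step N a I N' -> In (p,x) I ->
   (a = ATau p /\ ((exists bs, N p = Some (TOut bs) /\ In x (toptags bs)) \/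
                   (exists X P, N p = Some (TMu x X P))))
 \/ (exists q l Q, N p = Some (TPend q l x Q) /\ a = AComm p l q)
 \/ (exists s l a0 Q bs P, N p = Some (TIn bs) /\ N s = Some (TPend p l a0 Q)
        /\ InB s l x P bs /\ a = AComm s l p).
Proof.
  intros N a I N' p x H Hi; destruct H; simpl in Hi.
  - destruct Hi as [Hi|[]]; inversion Hi; subst.
    left; split; auto; left; eexists; split; eauto using InB_top.
  - destruct Hi as [Hi|[]]; inversion Hi; subst. left; split; eauto.
  - destruct Hi as [Hi|[Hi|[]]]; inversion Hi; subst.
    + right; left; eauto.
    + right; right; do 6 eexists; eauto.
Qed.

Lemma enab_head : forall N a I N' p x, step N a I N' -> In (p,x) I ->
  exists T, N p = Some T /\ In x (headtags T).
Proof.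
  intros. destruct (enab_cases _ _ _ _ _ _ H H0) as
   [[_ [[bs [E Hx]]|[X [P E]]]]|[[q [l [Q [E _]]]]|[s [l [a0 [Q [bs [P [E [_ [HB _]]]]]]]]]]];
   eexists; split; eauto; simpl; eauto using InB_top.
Qed.

Definition touch_res (N' : net) (a : act) (I : list instr) (p : loc) (T : thread) : Prop :=
  match T with
  | TOut bs => exists q l y P, I = [(p,y)] /\ N' p = Some (TPend q l y P)
  | TMu y X P => I = [(p,y)]
  | TPend q l y Q => a = AComm p l q /\ In (p,y) I
  | TIn bs => exists r l b P, InB r l b P bs /\ In (p,b) I /\ N' p = Some P
  | _ => False
  end.

Lemma touch : forall N a I N' p T, step N a I N' -> In p (comp a) -> N p = Some T ->
  touch_res N' a I p T.
Proof.
  intros N a I N' p T H Hp E; destruct H; simpl in Hp.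
  - destruct Hp as [Hp|[]]; subst. rewrite H in E; inversion E; subst; simpl.
    do 4 eexists; split; eauto. apply upd_eq.
  - destruct Hp as [Hp|[]]; subst. rewrite H in E; inversion E; subst; simpl. auto.
  - destruct Hp as [Hp|[Hp|[]]]; subst.
    + rewrite H0 in E; inversion E; subst; simpl. split; auto.
    + rewrite H1 in E; inversion E; subst; simpl.
      do 4 eexists; split; eauto. split. right; left; auto. apply upd_eq.
Qed.

Lemma tr_st : forall pi j, tr_idx pi j -> st_idx pi j /\ st_idx pi (S j).
Proof. unfold tr_idx, st_idx; intros; destruct (plen pi); lia. Qed.
Lemma st_tr : forall pi j, st_idx pi (S j) -> tr_idx pi j.
Proof. unfold tr_idx, st_idx; intros; destruct (plen pi); lia. Qed.
Lemma st_le : forall pi j j', j <= j' -> st_idx pi j' -> st_idx pi j.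
Proof. unfold st_idx; intros; destruct (plen pi); lia. Qed.
Lemma tr_le : forall pi j j', j <= j' -> tr_idx pi j' -> tr_idx pi j.
Proof. unfold tr_idx; intros; destruct (plen pi); lia. Qed.

Lemma unchanged : forall pi, is_path pi -> forall m r j, m <= j -> st_idx pi j ->
  (forall j', m <= j' -> j' < j -> ~ In r (comp (pact pi j'))) ->
  pst pi j r = pst pi m r.
Proof.
  intros pi [Hs _] m r j; induction j as [|j IH]; intros Hmj Hst Hn.
  - assert (m = 0) by lia; subst; auto.
  - destruct (Nat.eq_dec m (S j)) as [<-|Hne]; auto.
    assert (Ht := st_tr _ _ Hst).
    rewrite (step_frame _ _ _ _ _ (Hs j Ht)).
    + apply IH; [lia| apply (proj1 (tr_st _ _ Ht)) |]. intros; apply Hn; lia.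
    + apply Hn; lia.
Qed.

Lemma minimal : forall P : nat -> Prop, (exists n, P n) -> exists n, P n /\ forall m, m < n -> ~ P m.
Proof.
  intros P [n Hn]. induction n as [n IH] using lt_wf_ind.
  destruct (classic (exists m, m < n /\ P m)) as [[m [Hm Pm]]|Hno].
  - apply (IH m Hm Pm).
  - exists n; split; auto. intros m Hm Pm; apply Hno; eauto.
Qed.

Lemma first_touch : forall pi r m, is_path pi -> st_idx pi m ->
  (exists j, m <= j /\ tr_idx pi j /\ In r (comp (pact pi j))) ->
  exists j, m <= j /\ tr_idx pi j /\ In r (comp (pact pi j)) /\ pst pi j r = pst pi m r.
Proof.
  intros pi r m Hp Hm Hex. destruct (minimal _ Hex) as [j [[Hmj [Ht Hr]] Hmin]].
  exists j; repeat split; auto.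
  apply unchanged; auto. apply (proj1 (tr_st _ _ Ht)).
  intros j' H1 H2 H3. apply (Hmin j' H2). repeat split; auto. eapply tr_le; [|eauto]; lia.
Qed.

Lemma WI_just : forall pi, is_path pi -> WI_fair pi -> just pi.
Proof.
  intros pi Hp HW k Hk a I N' Hst.
  apply NNPP; intro Hno.
  destruct (step_nonempty _ _ _ _ Hst) as [[p0 x0] Hi].
  assert (Hag : forall j, k <= j -> st_idx pi j -> forall r, In r (comp a) -> pst pi j r = pst pi k r).
  { intros j Hkj Hj r Hr. apply unchanged; auto.
    intros j' H1 H2 H3. apply Hno. exists j'; repeat split; auto.
    apply st_tr. eapply st_le; [|eauto]; lia. eauto. }
  destruct (HW k Hk (p0,x0)) as [j [Hkj [Ht Hin]]].
  - intros j Hkj Hj. destruct (step_agree _ _ _ _ (pst pi j) Hst) as [M' HM].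
    + intros r Hr; apply Hag; auto.
    + exists a, I, M'; auto.
  - apply Hno. exists j; repeat split; auto. exists p0; split.
    + eapply instr_loc; eauto.
    + eapply instr_loc; [apply (proj1 Hp j Ht)|eauto].
Qed.

Scheme thread_ind2 := Induction for thread Sort Prop
  with branches_ind2 := Induction for branches Sort Prop.

Fixpoint mtags (P : thread) : list tag :=
  match P with
  | TEnd | TVar _ => []
  | TOut bs | TIn bs => mtagsB bs
  | TMu a _ P' => a :: mtags P'
  | TPend _ _ _ P' => mtags P'
  end
with mtagsB (bs : branches) : list tag :=
  match bs with
  | BNil => []
  | BCons _ _ _ P bs' => mtags P ++ mtagsB bs'
  end.

Fixpoint btags (P : thread) : list tag :=
  match P with
  | TEnd | TVar _ => []
  | TOut bs | TIn bs => btagsB bs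
  | TMu _ _ P' => btags P'
  | TPend _ _ a P' => a :: btags P'
  end
with btagsB (bs : branches) : list tag :=
  match bs with
  | BNil => []
  | BCons _ _ a P bs' => a :: btags P ++ btagsB bs'
  end.

Lemma tags_perm : forall T, Permutation (tags T) (mtags T ++ btags T).
Proof.
  apply (thread_ind2 (fun T => Permutation (tags T) (mtags T ++ btags T))
                     (fun bs => Permutation (tagsB bs) (mtagsB bs ++ btagsB bs)));
  simpl; intros; auto;
  try (eapply perm_trans; [apply perm_skip; eauto | apply Permutation_middle]).
  eapply perm_trans. apply perm_skip. apply Permutation_app; eauto.
    rewrite <- app_assoc. eapply perm_trans; [|apply Permutation_middle].
    apply perm_skip. rewrite <- !app_assoc. apply Permutation_app_head.
    apply Permutation_app_swap_app.
Qed.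

Lemma NoDup_app_disj : forall (l1 l2 : list tag) a, NoDup (l1 ++ l2) -> In a l1 -> In a l2 -> False.
Proof.
  induction l1; simpl; intros l2 x H H1 H2; [tauto|].
  inversion H; subst. destruct H1; subst; eauto.
  match goal with Hn : ~ In _ _ |- _ => apply Hn end; apply in_or_app; auto.
Qed.

Lemma mb_disj : forall T a, NoDup (tags T) -> In a (mtags T) -> In a (btags T) -> False.
Proof.
  intros T a H H1 H2. apply (NoDup_app_disj (mtags T) (btags T) a); auto.
  eapply Permutation_NoDup; [apply tags_perm|auto].
Qed.

Lemma InB_incl : forall bs q l a P, InB q l a P bs ->
  incl (mtags P) (mtagsB bs) /\ incl (btags P) (btagsB bs) /\
  (NoDup (tagsB bs) -> NoDup (tags P)).
Proof.
  induction bs as [|p0 l0 a0 P0 bs IH]; simpl; [tauto|].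
  intros q l a P [[? [? [? ?]]]|H]; subst.
  - repeat split.
    + intros x Hx; apply in_or_app; auto.
    + intros x Hx; right; apply in_or_app; auto.
    + intro H; inversion H; subst. eapply NoDup_app_remove_r; eauto.
  - destruct (IH _ _ _ _ H) as [H1 [H2 H3]]. repeat split.
    + intros x Hx; apply in_or_app; auto.
    + intros x Hx; right; apply in_or_app; auto.
    + intro Hn; inversion Hn; subst. apply H3. eapply NoDup_app_remove_l; eauto.
Qed.

Inductive Sub (O : thread) : thread -> Prop :=
| s_refl : Sub O O
| s_out : forall bs q l a P, Sub O (TOut bs) -> InB q l a P bs -> Sub O P
| s_in : forall bs q l a P, Sub O (TIn bs) -> InB q l a P bs -> Sub O P
| s_mu : forall a X P, Sub O (TMu a X P) -> Sub O P.

Lemma Sub_props : forall O S, Sub O S -> NoDup (tags O) ->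
  incl (mtags S) (mtags O) /\ incl (btags S) (btags O) /\ NoDup (tags S).
Proof.
  intros O S H Hn; induction H.
  - repeat split; auto; intros x; auto.
  - destruct IHSub as [H1 [H2 H3]]; destruct (InB_incl _ _ _ _ _ H0) as [G1 [G2 G3]].
    repeat split; auto; intros x Hx; auto.
  - destruct IHSub as [H1 [H2 H3]]; destruct (InB_incl _ _ _ _ _ H0) as [G1 [G2 G3]].
    repeat split; auto; intros x Hx; auto.
  - destruct IHSub as [H1 [H2 H3]]; simpl in *. repeat split; auto.
    + intros x Hx; apply H1; simpl; auto.
    + inversion H3; auto.
Qed.

Inductive Inst (O : thread) : thread -> thread -> Prop :=
| I_var : forall X, Inst O (TVar X) (TVar X)
| I_varmu : forall X a Y P PS, Sub O (TMu a Y PS) -> Inst O (TMu a Y P) (TMu a Y PS) ->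
    Inst O (TMu a Y P) (TVar X)
| I_end : Inst O TEnd TEnd
| I_out : forall bs bsS, InstB O bs bsS -> Inst O (TOut bs) (TOut bsS)
| I_in : forall bs bsS, InstB O bs bsS -> Inst O (TIn bs) (TIn bsS)
| I_mu : forall a X P PS, Inst O P PS -> Inst O (TMu a X P) (TMu a X PS)
with InstB (O : thread) : branches -> branches -> Prop :=
| IB_nil : InstB O BNil BNil
| IB_cons : forall p l a P PS bs bsS, Inst O P PS -> InstB O bs bsS ->
    InstB O (BCons p l a P bs) (BCons p l a PS bsS).

Scheme Inst_ind2 := Induction for Inst Sort Prop
  with InstB_ind2 := Induction for InstB Sort Prop.

Lemma Inst_refl : forall O T, nopend T -> Inst O T T.
Proof.
  intro O.
  apply (thread_ind2 (fun T => nopend T -> Inst O T T) (fun bs => nopendB bs -> InstB O bs bs));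
  simpl; intros; try constructor; try tauto.
Qed.

Lemma Inst_subst : forall O X R, (forall Y, Inst O R (TVar Y)) ->
  forall T S, Inst O T S -> Inst O (subst X R T) S.
Proof.
  intros O X R HR.
  apply (Inst_ind2 O (fun T S _ => Inst O (subst X R T) S) (fun bs bsS _ => InstB O (substB X R bs) bsS));
  simpl; intros; try constructor; auto.
  - destruct (Nat.eqb X X0); auto. constructor.
  - simpl in H. destruct (Nat.eqb X Y); [econstructor; eauto|].
    eapply I_varmu; eauto.
  - destruct (Nat.eqb X X0); constructor; auto.
Qed.

Definition Good (O T : thread) : Prop :=
  (exists S, Sub O S /\ Inst O T S) \/
  (exists q l a P PS, T = TPend q l a P /\ Sub O PS /\ Inst O P PS).

Lemma InstB_InB : forall O bs bsS, InstB O bs bsS -> forall r l b P, InB r l b P bs ->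
  exists PS, InB r l b PS bsS /\ Inst O P PS.
Proof.
  intros O bs bsS H; induction H; simpl; [tauto|].
  intros r l0 b P0 [[? [? [? ?]]]|Hb]; subst.
  - exists PS; split; [left; auto | auto].
  - destruct (IHInstB _ _ _ _ Hb) as [PS' [H1 H2]]; exists PS'; split; auto.
Qed.

Lemma InstB_top : forall O bs bsS, InstB O bs bsS -> toptags bs = toptags bsS.
Proof. intros O bs bsS H; induction H; simpl; congruence. Qed.

Lemma Inst_mu_inv : forall O a X P S, Inst O (TMu a X P) S -> Sub O S ->
  exists PS, Sub O (TMu a X PS) /\ Inst O P PS.
Proof.
  intros O a X P S HI HS.
  inversion HI as [| X0 a0 Y0 P0 PS0 HsM HIM | | | | a0 X0 P0 PS0 HIP]; subst.
  - inversion HIM; exists PS0; split; auto.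
  - exists PS0; auto.
Qed.

Lemma Good_step : forall O T, Good O T ->
  (forall bs q l a P, T = TOut bs -> InB q l a P bs -> Good O (TPend q l a P)) /\
  (forall a X P, T = TMu a X P -> Good O (subst X (TMu a X P) P)) /\
  (forall bs r l b P, T = TIn bs -> InB r l b P bs -> Good O P) /\
  (forall q l a P, T = TPend q l a P -> Good O P).
Proof.
  intros O T [[S [HS HI]]|[q [l [a [P [PS [E [HS HI]]]]]]]].
  - repeat split; intros; subst.
    + inversion HI; subst. match goal with Hb : InstB _ _ _ |- _ => destruct (InstB_InB _ _ _ Hb _ _ _ _ H0) as [PS [H2 H3]] end.
      right; exists q, l, a, P, PS; split; [auto|split; [eapply s_out; eauto | auto]].
    + assert (exists PS, Sub O (TMu a X PS) /\ Inst O P PS) as [PS [H1 H2]].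
      { apply (Inst_mu_inv O a X P S); auto. }
      left. exists PS; split. eapply s_mu; eauto.
      apply Inst_subst; auto. intro Y. eapply I_varmu; eauto. constructor; auto.
    + inversion HI; subst. match goal with Hb : InstB _ _ _ |- _ => destruct (InstB_InB _ _ _ Hb _ _ _ _ H0) as [PS [H3 H4]] end.
      left. exists PS; split; auto. eapply s_in; eauto.
    + inversion HI.
  - subst. repeat split; intros; try discriminate.
    inversion H; subst. left; eauto.
Qed.

Lemma headtags_tags : forall T x, In x (headtags T) -> In x (tags T).
Proof.
  assert (forall bs x, In x (toptags bs) -> In x (tagsB bs)).
  { induction bs; simpl; intros x H; [tauto|]. destruct H; auto.
    right; apply in_or_app; auto. }
  destruct T; simpl; intros; auto; tauto.
Qed.

Lemma toptags_btags : forall bs x, In x (toptags bs) -> In x (btagsB bs).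
Proof.
  induction bs; simpl; intros x H; [tauto|]. destruct H; auto.
  right; apply in_or_app; auto.
Qed.

Lemma branch_disj : forall bs r l b PS x, NoDup (tagsB bs) -> InB r l b PS bs ->
  In x (toptags bs) -> x <> b -> ~ In x (tags PS).
Proof.
  induction bs as [|p0 l0 a0 P0 bs IH]; simpl; [tauto|].
  intros r l b PS x Hn HB Hx Hxb Hin. inversion Hn; subst.
  assert (Hd: ~ In x (tags P0) \/ ~ In x (tagsB bs)).
  { destruct (classic (In x (tags P0))); auto. right; intro.
    eapply (NoDup_app_disj (tags P0)); eauto. }
  destruct HB as [[? [? [? ?]]]|HB]; subst.
  - destruct Hx as [Hx|Hx]; [congruence|].
    destruct Hd as [Hd|Hd]; auto. apply Hd. clear -Hx.
    induction bs; simpl in *; [tauto|]. destruct Hx; auto. right; apply in_or_app; auto.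
  - destruct Hx as [Hx|Hx].
    + subst. apply H1. apply in_or_app; right.
      destruct (InB_incl _ _ _ _ _ HB) as [_ [_ _]].
      clear -HB Hin. induction bs; simpl in *; [tauto|].
      destruct HB as [[? [? [? ?]]]|HB]; subst.
      * right; apply in_or_app; auto.
      * right; apply in_or_app; auto.
    + eapply IH; eauto. eapply NoDup_app_remove_l; eauto.
Qed.

Lemma K : forall O bs r l b P x, NoDup (tags O) -> Good O (TIn bs) ->
  InB r l b P bs -> In x (toptags bs) -> x <> b -> ~ In x (headtags P).
Proof.
  intros O bs r l b P x Hn [[S [HS HI]]|[? [? [? [? [? [E _]]]]]]] HB Hx Hxb; [|discriminate].
  inversion HI; subst. rename bsS into bsS.
  destruct (InstB_InB _ _ _ H0 _ _ _ _ HB) as [PS [HB' HI']].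
  rewrite (InstB_top _ _ _ H0) in Hx.
  destruct (Sub_props _ _ HS Hn) as [Hm [Hb Hnd]]. simpl in *.
  intro Hh. inversion HI'; subst; simpl in Hh.
  - tauto.
  - destruct Hh as [Hh|[]]; subst.
    destruct (Sub_props _ _ H Hn) as [Hm' _]. simpl in Hm'.
    apply (mb_disj O x Hn). apply Hm'; simpl; auto. apply Hb. apply toptags_btags; auto.
  - tauto.
  - eapply branch_disj; eauto. apply headtags_tags; simpl; erewrite <- InstB_top; eauto.
  - eapply branch_disj; eauto. apply headtags_tags; simpl; erewrite <- InstB_top; eauto.
  - eapply branch_disj; eauto. apply headtags_tags; simpl; auto.
Qed.

Definition NInv (N0 N : net) : Prop :=
  forall p T, N p = Some T -> exists O, N0 p = Some O /\ NoDup (tags O) /\ Good O T.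

Lemma NInv_init : forall N0, initial_net N0 -> NInv N0 N0.
Proof.
  intros N0 [_ H] p T E. destruct (H p T E) as [_ [_ [Hnp Hnd]]].
  exists T; repeat split; auto. left; exists T; split; [constructor|apply Inst_refl; auto].
Qed.

Lemma NInv_step : forall N0 N a I N', NInv N0 N -> step N a I N' -> NInv N0 N'.
Proof.
  intros N0 N a I N' Hinv Hs; destruct Hs; intros r T E; unfold upd in E.
  - destruct (Nat.eqb_spec r p); [subst|auto].
    inversion E; subst. destruct (Hinv p _ H) as [O [H1 [H2 H3]]].
    exists O; repeat split; auto. eapply (proj1 (Good_step _ _ H3)); eauto.
  - destruct (Nat.eqb_spec r p); [subst|auto].
    inversion E; subst. destruct (Hinv p _ H) as [O [H1 [H2 H3]]].
    exists O; repeat split; auto. eapply (proj1 (proj2 (Good_step _ _ H3))); eauto.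
  - destruct (Nat.eqb_spec r q); [subst|].
    + inversion E; subst. destruct (Hinv q _ H1) as [O [G1 [G2 G3]]].
      exists O; repeat split; auto. eapply (proj1 (proj2 (proj2 (Good_step _ _ G3)))); eauto.
    + destruct (Nat.eqb_spec r p); [subst|auto].
      inversion E; subst. destruct (Hinv p _ H0) as [O [G1 [G2 G3]]].
      exists O; repeat split; auto. eapply (proj2 (proj2 (proj2 (Good_step _ _ G3)))); eauto.
Qed.

Lemma NInv_reach : forall N0 N, initial_net N0 -> reachable N0 N -> NInv N0 N.
Proof.
  intros N0 N Hi Hr.
  assert (G : forall x y, Relation_Operators.clos_refl_trans net
    (fun M M' => exists a I, step M a I M') x y -> NInv N0 x -> NInv N0 y).
  { intros x y H; induction H; auto. destruct H as [a [I Hs]]. intro; eapply NInv_step; eauto. }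
  apply (G N0); auto. apply NInv_init; auto.
Qed.

Lemma NInv_path : forall N0 pi, initial_net N0 -> reachable N0 (pst pi 0) -> is_path pi ->
  forall j, st_idx pi j -> NInv N0 (pst pi j).
Proof.
  intros N0 pi Hi Hr Hp j; induction j; intros Hj.
  - apply NInv_reach; auto.
  - assert (Ht := st_tr _ _ Hj). eapply NInv_step; [apply IHj, (proj1 (tr_st _ _ Ht))|].
    apply (proj1 Hp j Ht).
Qed.

Fixpoint tsize (T : thread) : nat :=
  match T with
  | TOut bs | TIn bs => S (bsize bs)
  | TMu _ _ P => S (tsize P)
  | TPend _ _ _ P => S (tsize P)
  | _ => 1
  end
with bsize (bs : branches) : nat :=
  match bs with
  | BNil => 0
  | BCons _ _ _ P bs' => tsize P + bsize bs'
  end.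

Lemma InB_size : forall bs r l b P, InB r l b P bs -> tsize P <= bsize bs.
Proof.
  induction bs; simpl; [tauto|]. intros r l1 b P [[? [? [? ?]]]|H]; subst; [lia|].
  specialize (IHbs _ _ _ _ H); lia.
Qed.

Lemma comm_inv : forall N p l q I N', step N (AComm p l q) I N' -> exists bs, N q = Some (TIn bs).
Proof. intros. inversion H; subst; eauto. Qed.

Lemma just_WI : forall N0 pi, is_path pi -> (forall j, st_idx pi j -> NInv N0 (pst pi j)) ->
  just pi -> WI_fair pi.
Proof.
  intros N0 pi Hp Hinv HJ k Hk [p x] Hen.
  assert (HA : exists j, k <= j /\ tr_idx pi j /\ In p (comp (pact pi j))).
  { apply NNPP; intro H.
    assert (Hc : forall j, k <= j -> st_idx pi j -> pst pi j p = pst pi k p).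
    { intros j Hkj Hj. apply unchanged; auto. intros j' H1 H2 H3. apply H. exists j'; repeat split; auto.
      apply st_tr. eapply st_le; [|eauto]; lia. }
    destruct (Hen k (le_n k) Hk) as [a [I [N' [Hs Hi]]]].
    destruct (enab_cases _ _ _ _ _ _ Hs Hi) as
      [[-> _] | [[q [l [Q [Ep ->]]]] | [s [l [a0 [Q [bs [P [Ep [Es [HB ->]]]]]]]]]]].
    - destruct (HJ k Hk _ _ _ Hs) as [j [Hkj [Ht [r [Hr1 Hr2]]]]].
      simpl in Hr1; destruct Hr1 as [<-|[]]. apply H; eauto.
    - assert (Hq : forall m, k <= m -> st_idx pi m -> exists bs I' N'',
                pst pi m q = Some (TIn bs) /\ step (pst pi m) (AComm p l q) I' N'').
      { intros m Hkm Hm. destruct (Hen m Hkm Hm) as [a' [I' [N'' [Hs' Hi']]]].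
        rewrite <- (Hc m Hkm Hm) in Ep.
        destruct (enab_cases _ _ _ _ _ _ Hs' Hi') as
          [[_ [[bs [E _]]|[X [P E]]]] | [[q' [l' [Q' [E ->]]]] | [s [l' [a0 [Q' [bs [P [E _]]]]]]]]];
          rewrite Ep in E; inversion E; subst.
        destruct (comm_inv _ _ _ _ _ _ Hs') as [bs Hb]. eauto. }
      assert (Hall : forall n m bs, k <= m -> st_idx pi m -> pst pi m q = Some (TIn bs) ->
                 bsize bs < n -> False).
      { induction n; intros m bs Hkm Hm Eq Hsz; [lia|].
        destruct (Hq m Hkm Hm) as [bs0 [I' [N'' [Eq' Hs']]]].
        destruct (HJ m Hm _ _ _ Hs') as [j [Hmj [Ht [r [Hr1 Hr2]]]]].
        simpl in Hr1; destruct Hr1 as [<-|[<-|[]]].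
        - apply H; exists j; repeat split; auto; lia.
        - destruct (first_touch pi q m Hp Hm) as [j' [Hmj' [Ht' [Hr' Hpr]]]]; [eauto|].
          rewrite Eq in Hpr.
          destruct (tr_st _ _ Ht') as [_ Hst'].
          pose proof (touch _ _ _ _ _ _ (proj1 Hp j' Ht') Hr' Hpr) as [r0 [l0 [b [P [HB [_ E']]]]]].
          destruct (Hq (S j') ltac:(lia) Hst') as [bs1 [_ [_ [Eq1 _]]]].
          rewrite Eq1 in E'; inversion E'; subst.
          apply (IHn (S j') bs1); auto; [lia|].
          pose proof (InB_size _ _ _ _ _ HB); simpl in *; lia. }
      destruct (Hq k (le_n k) Hk) as [bs [_ [_ [Eq _]]]].
      apply (Hall (S (bsize bs)) k bs); auto.
    - destruct (HJ k Hk _ _ _ Hs) as [j [Hkj [Ht [r [Hr1 Hr2]]]]].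
      simpl in Hr1; destruct Hr1 as [<-|[<-|[]]].
      + destruct (first_touch pi s k Hp Hk) as [j' [Hmj' [Ht' [Hr' Hpr]]]]; [eauto|].
        rewrite Es in Hpr.
        pose proof (touch _ _ _ _ _ _ (proj1 Hp j' Ht') Hr' Hpr) as [Ea _].
        apply H; exists j'; repeat split; auto. rewrite Ea; simpl; auto.
      + apply H; eauto. }
  destruct (first_touch pi p k Hp Hk HA) as [j [Hkj [Ht [Hr Hpr]]]].
  destruct (tr_st _ _ Ht) as [Hsj HsSj].
  pose proof (proj1 Hp j Ht) as Hsj'.
  destruct (Hen k (le_n k) Hk) as [a [I [N' [Hs Hi]]]].
  exists j; repeat split; auto.
  destruct (enab_cases _ _ _ _ _ _ Hs Hi) as
      [[_ [[bs [Ep Hx]]|[X [P Ep]]]] | [[q [l [Q [Ep _]]]] | [s [l [a0 [Q [bs [P [Ep [Es [HB _]]]]]]]]]]];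
    rewrite <- Hpr in Ep; pose proof (touch _ _ _ _ _ _ Hsj' Hr Ep) as T; simpl in T.
  - destruct T as [q [l [y [P [EI EP]]]]]. rewrite EI.
    destruct (Hen (S j) ltac:(lia) HsSj) as [a' [I' [N'' [Hs' Hi']]]].
    destruct (enab_head _ _ _ _ _ _ Hs' Hi') as [T' [E' Hx']]. rewrite EP in E'; inversion E'; subst.
    simpl in Hx'. destruct Hx' as [<-|[]]; simpl; auto.
  - rewrite T; simpl; auto.
  - tauto.
  - destruct T as [r [l' [b [P' [HB' [Hin EP]]]]]].
    destruct (Nat.eq_dec x b) as [<-|Hne]; auto.
    exfalso.
    destruct (Hen (S j) ltac:(lia) HsSj) as [a' [I' [N'' [Hs' Hi']]]].
    destruct (enab_head _ _ _ _ _ _ Hs' Hi') as [T' [E' Hx']]. rewrite EP in E'; inversion E'; subst.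
    destruct (Hinv j Hsj p _ Ep) as [O [_ [Hnd HG]]].
    eapply K; eauto. eapply InB_top; eauto.
Qed.

Theorem mainTheorem15 :
  forall (N0 : net) (pi : path),
    initial_net N0 ->
    reachable N0 (pst pi 0) ->
    is_path pi ->
    (WI_fair pi <-> just pi).
Proof.
  intros N0 pi Hi Hr Hp; split.
  - apply WI_just; auto.
  - apply (just_WI N0); auto. intros j Hj; apply NInv_path; auto.
Qed.
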